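(* Let $M$ be an $m\times n$ Boolean measurement matrix that is $(0,0,e'_0,e'_1)$-resilient for $d$-sparse vectors. Then $m\ge d\log(n/d)-d-e'_0-O\big(e'_1\log((n-d-e'_0)/e'_1)\big)$, where the last term is defined to be zero when $e'_1=0$.
   Context: Logarithms are base 2. For $x\in\{0,1\}^n$, $\mathrm{supp}(x)$ is the set of nonzero coordinates and $x$ is $d$-sparse if $|\mathrm{supp}(x)|\le d$. For an $m\times n$ Boolean matrix $M$ and $x\in\{0,1\}^n$, $M[x]\in\{0,1\}^m$ is the bitwise OR of the columns of $M$ indexed by $\mathrm{supp}(x)$. An ordered pair $(x,y)$ of binary vectors is $(e_0,e_1)$-close if $y$ can be obtained from $x$ by flipping at most $e_0$ bits from 0 to 1 and at most $e_1$ bits from 1 to 0; otherwise $(e_0,e_1)$-far. $M$ is $(e_0,e_1,e'_0,e'_1)$-resilient for $d$-sparse vectors if for every $y\in\{0,1\}^m$ there exists $z\in\{0,1\}^n$ such that for every $d$-sparse $x$: if $(x,z)$ is $(e'_0,e'_1)$-far then $(M[x],y)$ is $(e_0,e_1)$-far. *)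

(* Defs.v *)
From mathcomp Require Import all_boot.
From Stdlib Require Import Reals.

Set Implicit Arguments.
Unset Strict Implicit.
Unset Printing Implicit Defensive.

Definition bvec (n : nat) := 'I_n -> bool.
Definition bmatrix (m n : nat) := 'I_m -> 'I_n -> bool.

Definition supp (n : nat) (x : bvec n) : {set 'I_n} := [set i | x i].

Definition sparse (n d : nat) (x : bvec n) : bool := #|supp x| <= d.

Definition measure (m n : nat) (M : bmatrix m n) (x : bvec n) : bvec m :=
  fun i => [exists j : 'I_n, (j \in supp x) && M i j].

Definition close (n e0 e1 : nat) (x y : bvec n) : bool :=
  (#|[set i | ~~ x i && y i]| <= e0) && (#|[set i | x i && ~~ y i]| <= e1).

Definition far (n e0 e1 : nat) (x y : bvec n) : bool := ~~ close e0 e1 x y.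

Definition resilient (m n : nat) (e0 e1 e0' e1' d : nat) (M : bmatrix m n) : Prop :=
  forall y : bvec m, exists z : bvec n, forall x : bvec n,
    sparse d x -> far e0' e1' x z -> far e0 e1 (measure M x) y.

Definition log2 (r : R) : R := (ln r / ln 2)%R.

(* Main.v *)
Require Import Defs.
From mathcomp Require Import all_boot.
From Stdlib Require Import Reals Lra Lia Psatz.
From mathcomp Require Import ssrnat.
From mathcomp Require Import zify.
Set Implicit Arguments. Unset Strict Implicit. Unset Printing Implicit Defensive.

Lemma expn_mono a b k : a <= b -> a ^ k <= b ^ k.
Proof. move=> h; elim: k => // k IH; rewrite !expnS; exact: leq_mul. Qed.

Lemma binom_lower n d : d <= n -> n ^ d <= d ^ d * 'C(n, d).
Proof.
elim: d n => [|d IH] n hdn; first by rewrite bin0.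
case: n hdn => [//|n] hdn; rewrite ltnS in hdn.
have e1 := mul_bin_diag n.+1 d; rewrite /= in e1.
rewrite expnS [d.+1 ^ d.+1]expnS -mulnA mulnCA -e1 mulnCA leq_mul2l /=.
have hp : 0 < d ^ d by rewrite expn_gt0; case: d {IH e1 hdn}.
rewrite -(leq_pmul2r hp).
apply: (@leq_trans (d.+1 ^ d * n ^ d)).
  rewrite -!expnMn; apply: expn_mono; lia.
rewrite [_ * d ^ d]mulnC mulnA [X in _ <= X * _]mulnC -mulnA leq_mul2l; apply/orP; right.
exact: IH.
Qed.

Definition Ssum N e := \sum_(k < e.+1) 'C(N, k).

Lemma Ssum_bound N e : e <= N -> e ^ e * N ^ (N - e) * Ssum N e <= (N + e) ^ N.
Proof.
move=> heN; rewrite expnDn /Ssum big_distrr /=.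
rewrite (big_ord_widen N.+1 (fun k => e ^ e * N ^ (N - e) * 'C(N, k))) ?ltnS //.
rewrite [X in _ <= X](bigID (fun i : 'I_N.+1 => i < e.+1)) /=.
apply: leq_trans (leq_addr _ _).
apply: leq_sum => k hk; rewrite ltnS in hk.
have hkN : k <= N by lia.
rewrite [X in _ <= X]mulnC; apply: leq_mul => //.
have -> : e ^ e = e ^ k * e ^ (e - k) by rewrite -expnD subnKC.
have -> : N ^ (N - k) = N ^ (e - k) * N ^ (N - e) by rewrite -expnD; congr (_ ^ _); lia.
have h := expn_mono (e - k) heN.
move: h; set a := e ^ k; set b := e ^ (e - k); set c := N ^ (e - k); set g := N ^ (N - e).
move=> h; apply: (@leq_trans (a * c * g)).
  by apply: leq_mul => //; apply: leq_mul.
by rewrite [c * g * a]mulnC mulnA.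
Qed.

Lemma Bcount (T : finType) (S : {set T}) e :
  #|[set B : {set T} | (B \subset S) && (#|B| <= e)]| = Ssum #|S| e.
Proof.
rewrite /Ssum; elim: e => [|e IH].
  rewrite big_ord_recr big_ord0 bin0 /=.
  rewrite (_ : [set B : {set T} | _] = [set set0]) ?cards1 //.
  apply/setP => B; rewrite !inE leqn0 cards_eq0.
  by case: (B =P set0) => [->|]; rewrite ?sub0set ?andbF // eqxx.
rewrite big_ord_recr /= -IH -(cards_draws S e.+1).
rewrite (_ : [set B : {set T} | _] = [set B : {set T} | (B \subset S) && (#|B| <= e)]
   :|: [set B : {set T} | (B \subset S) & #|B| == e.+1]).
  rewrite cardsU (_ : _ :&: _ = set0) ?cards0 ?subn0 //.
  apply/setP => B; rewrite !inE; case: (#|B| <= e) / idP => h; last by rewrite andbF.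
  by rewrite [_ == _]eqn_leq [_.+1 <= _]leqNgt ltnS h !andbF.
apply/setP => B; rewrite !inE -andb_orr; congr (_ && _).
by rewrite leq_eqVlt ltnS orbC.
Qed.

Lemma Ssum_pow2 N e : Ssum N e <= 2 ^ N.
Proof.
have := Bcount [set: 'I_N] e; rewrite cardsT card_ord => <-.
have := card_powerset [set: 'I_N]; rewrite cardsT card_ord => <-.
by apply: subset_leq_card; apply/subsetP => B; rewrite !inE => /andP[].
Qed.

Lemma Ssum_pos N e : 1 <= Ssum N e.
Proof. by rewrite /Ssum big_ord_recl bin0 leq_addr. Qed.

Lemma fiber (T : finType) (F : {set {set T}}) (Z : {set T}) e :
  (forall A, A \in F -> #|A :\: Z| <= e) -> #|F| <= 2 ^ #|Z| * Ssum #|~: Z| e.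
Proof.
move=> hF.
pose f (A : {set T}) := (A :&: Z, A :\: Z).
have finj : injective f.
  by move=> A B [h1 h2]; rewrite -(setID A Z) -(setID B Z) h1 h2.
rewrite -(card_imset F finj) -card_powerset -Bcount -cardsX.
apply: subset_leq_card; apply/subsetP => p /imsetP [A hA ->].
rewrite !inE /= subsetIr hF // andbT setDE subsetIr.
by [].
Qed.

Definition vec n (A : {set 'I_n}) : bvec n := fun i => i \in A.

Lemma comb (m n d e0 e1 : nat) (M : bmatrix m n) :
  resilient 0 0 e0 e1 d M ->
  'C(n, d) <= 2 ^ m * \max_(z < (minn n (d + e0)).+1) (2 ^ z * Ssum (n - z) e1).
Proof.
move=> hres.
set Q := \max_(z < _) _.
pose msr (A : {set 'I_n}) := [set i | measure M (vec A) i].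
pose D := [set A : {set 'I_n} | #|A| == d].
have -> : 'C(n, d) = #|D| by rewrite card_draws card_ord.
rewrite -sum1_card (partition_big msr predT) //=.
have -> : 2 ^ m = #|{: {set 'I_m}}|.
  have := card_powerset [set: 'I_m]; rewrite cardsT card_ord => <-.
  by apply: eq_card => Y; rewrite !inE subsetT.
rewrite -sum_nat_const; apply: leq_sum => Y _.
set F := [set A in D | msr A == Y].
have -> : \sum_(A | (A \in D) && (msr A == Y)) 1 = #|F|.
  by rewrite -sum1_card; apply: eq_bigl => A; rewrite !inE.
have [z hz] := hres (vec Y).
pose Z := [set i | z i].
have hcl : forall A, A \in F -> #|Z :\: A| <= e0 /\ #|A :\: Z| <= e1.
  move=> A; rewrite !inE => /andP [/eqP hA /eqP hY].
  have hsp : sparse d (vec A).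
    by rewrite /sparse (_ : supp (vec A) = A) ?hA //; apply/setP => i; rewrite !inE.
  have := hz _ hsp; rewrite /far /close.
  have hm : forall i, measure M (vec A) i = vec Y i.
    by move=> i; rewrite /vec -hY !inE.
  rewrite (eq_card0 (A := [set i | ~~ measure M (vec A) i && vec Y i])); last first.
    by move=> i; rewrite !inE hm; case: (vec Y i).
  rewrite (eq_card0 (A := [set i | measure M (vec A) i && ~~ vec Y i])); last first.
    by move=> i; rewrite !inE hm; case: (vec Y i).
  rewrite /=.
  case: andP => [[h1 h2] _ | _ /(_ isT) //].
  split.
    by apply: leq_trans h1; rewrite leq_eqVlt; apply/orP; left; apply/eqP; apply: eq_card => i; rewrite !inE /vec andbC.
  by apply: leq_trans h2; rewrite leq_eqVlt; apply/orP; left; apply/eqP; apply: eq_card => i; rewrite !inE /vec andbC.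
have [->|[A0 hA0]] := set_0Vmem F; first by rewrite cards0.
have hZ : #|Z| <= d + e0.
  have := cardsID A0 Z; have := subset_leq_card (subsetIr Z A0).
  have hA0' := hA0; move: hA0'; rewrite !inE => /andP [/eqP hA _].
  have := (hcl A0 hA0).1; move=> h1 h2 <-; rewrite -hA; exact: leq_add.
have hZn : #|Z| <= n by rewrite -[n in _ <= n]card_ord max_card.
have hF := @fiber _ F Z e1 (fun A h => (hcl A h).2).
have hc : #|~: Z| = n - #|Z| by have := cardsC Z; rewrite card_ord; lia.
apply: leq_trans hF _; rewrite hc.
have hi : #|Z| < (minn n (d + e0)).+1 by rewrite ltnS leq_min hZn hZ.
exact: (@leq_bigmax _ (fun i : 'I_(minn n (d + e0)).+1 => 2 ^ i * Ssum (n - i) e1) (Ordinal hi)).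
Qed.

Open Scope R_scope.

Lemma lnle x y : 0 < x -> x <= y -> ln x <= ln y.
Proof. intros Hx [H|H]. left; apply ln_increasing; auto. subst; lra. Qed.

Lemma ln_sub1 x : 0 < x -> ln x <= x - 1.
Proof. intros Hx. pose proof (exp_ineq1_le (ln x)). rewrite exp_ln in H; lra. Qed.

Lemma ln2_gt : / 2 < ln 2. Proof. exact ln_lt_2. Qed.

Lemma key_real (N e s : nat) (K T : R) :
  (0 < e)%nat -> INR N = K + INR s ->
  1 <= T -> T <= 2 ^ N ->
  ((e <= N)%nat -> INR e ^ e * INR N ^ (N - e) * T <= INR (N+e) ^ N) ->
  ln T <= INR s * ln 2 + 4 * INR e * ln (Rmax 2 (K / INR e)).
Proof.
  intros He HN HT1 HT2 Hb.
  pose proof ln2_gt as Hl2.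
  assert (Hx : 0 < INR e) by (apply lt_0_INR; lia).
  assert (Hs : 0 <= INR s) by apply pos_INR.
  destruct (Rle_or_lt K (4 * INR e)) as [HK|HK].
  - assert (ln T <= INR N * ln 2).
    { rewrite -ln_pow; try solve [lra]. apply lnle; lra. }
    assert (ln 2 <= ln (Rmax 2 (K / INR e))) by (apply lnle; [lra| apply Rmax_l]).
    assert (INR e * ln 2 <= INR e * ln (Rmax 2 (K / INR e))) by (apply Rmult_le_compat_l; lra).
    rewrite HN in H. nra.
  - assert (HK4 : 4 < K / INR e).
    { apply (Rmult_lt_reg_r (INR e)); auto. unfold Rdiv. rewrite Rmult_assoc Rinv_l; try solve [lra]; lra. }
    rewrite Rmax_right; try solve [lra].
    set (L := ln (K / INR e)).
    assert (HL : ln 4 < L) by (apply ln_increasing; lra).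
    assert (ln 4 = 2 * ln 2) by (replace 4 with (2*2) by lra; rewrite ln_mult; lra).
    assert (HeN : (e <= N)%nat).
    { apply/leP; apply INR_le. lra. }
    assert (HeN2 : (e <= N)%coq_nat) by (apply/leP; exact HeN).
    specialize (Hb HeN).
    assert (Hy : 0 < INR N) by lra.
    rewrite plus_INR in Hb.
    assert (HT0 : 0 < T) by lra.
    apply lnle in Hb.
    2:{ apply Rmult_lt_0_compat; [apply Rmult_lt_0_compat|]; auto; apply pow_lt; auto. }
    rewrite !ln_mult in Hb; try solve [try apply Rmult_lt_0_compat; try apply pow_lt; auto].
    rewrite !ln_pow in Hb; try solve [lra].
    rewrite minus_INR in Hb; try solve [auto].
    assert (H1 : ln (INR N + INR e) <= ln (INR N) + INR e / INR N).
    { replace (INR N + INR e) with (INR N * ((INR N + INR e) / INR N)) by (field; lra).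
      rewrite ln_mult; try solve [try apply Rdiv_lt_0_compat; lra].
      pose proof (@ln_sub1 ((INR N + INR e) / INR N)) as Hq.
      assert ((INR N + INR e) / INR N - 1 = INR e / INR N) by (field; lra).
      assert (0 < (INR N + INR e) / INR N) by (apply Rdiv_lt_0_compat; lra).
      lra. }
    assert (H2 : ln (INR N) <= ln (INR e) + L + (INR N / K - 1)).
    { replace (INR N) with (INR e * ((K / INR e) * (INR N / K))) at 1 by (field; lra).
      assert (0 < K / INR e) by lra.
      assert (0 < INR N / K) by (apply Rdiv_lt_0_compat; lra).
      rewrite ln_mult; try solve [try apply Rmult_lt_0_compat; lra].
      rewrite ln_mult; try solve [lra].
      pose proof (@ln_sub1 (INR N / K)). unfold L. lra. }
    assert (H3 : INR N * ln (INR N + INR e) <= INR N * ln (INR N) + INR e).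
    { replace (INR e) with (INR N * (INR e / INR N)) at 2 by (field; lra).
      rewrite -Rmult_plus_distr_l. apply Rmult_le_compat_l; lra. }
    assert (H4 : INR e * ln (INR N) <= INR e * (ln (INR e) + L + (INR N / K - 1))).
    { apply Rmult_le_compat_l; lra. }
    assert (H5 : INR e * (INR N / K) <= INR e + INR s / 4).
    { rewrite HN. replace (INR e * ((K + INR s) / K)) with (INR e + INR s * (INR e / K)) by (field; lra).
      assert (INR e / K < / 4).
      { apply (Rmult_lt_reg_r K). lra. unfold Rdiv. rewrite Rmult_assoc Rinv_l; try solve [lra].
        all: apply (Rmult_lt_reg_l 4); [lra|field_simplify; lra]. }
      nra. }
    nra.
Qed.

Lemma div_le A B l : 0 < l -> A <= B * l -> A / l <= B.
Proof.
move=> hl h. replace B with (B * l * / l) by (field; lra).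
unfold Rdiv; apply Rmult_le_compat_r; [left; apply Rinv_0_lt_compat|]; lra.
Qed.

Lemma INR_muln a b : INR (a * b)%N = INR a * INR b.
Proof. exact: mult_INR. Qed.

Lemma INR_expn a k : INR (a ^ k)%N = INR a ^ k.
Proof. elim: k => [|k IH] //=; rewrite expnS INR_muln IH //. Qed.

Lemma INR_leq a b : (a <= b)%N -> INR a <= INR b.
Proof. move/leP; exact: le_INR. Qed.

Theorem mainTheorem10 :
  exists C : R, (0 < C)%R /\
  forall (m n d e0' e1' : nat) (M : bmatrix m n),
    (0 < d)%N -> (d <= n)%N ->
    resilient 0 0 e0' e1' d M ->
    (INR d * log2 (INR n / INR d) - INR d - INR e0'
       - C * (if eqn e1' O then 0%R
              else INR e1' * log2 (Rmax 2 ((INR n - INR d - INR e0') / INR e1')))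
     <= INR m)%R.
Proof.
exists 4; split; first lra.
move=> m n d e0 e1 M hd hdn hres.
have hc := comb hres.
have [i hi] := @eq_bigmax _ (fun i : 'I_(minn n (d + e0)).+1 => 2 ^ i * Ssum (n - i) e1)%N (ltac:(by rewrite card_ord)).
rewrite hi /= in hc.
have hi1 : (i <= n)%N /\ (i <= d + e0)%N.
  by have := ltn_ord i; rewrite ltnS leq_min => /andP.
move: hc hi1; set z := nat_of_ord i => hc [hzn hzd].
set N := (n - z)%N; set s := (d + e0 - z)%N.
have Hl2 := ln2_gt.
have HT1 : 1 <= INR (Ssum N e1) by apply: (INR_leq (Ssum_pos N e1)).
have HC : INR 'C(n, d) <= 2 ^ m * (2 ^ z * INR (Ssum N e1)).
  by have := INR_leq hc; rewrite !INR_muln !INR_expn.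
have HC1 : 1 <= INR 'C(n, d) by apply: (INR_leq (a := 1)); rewrite bin_gt0.
have Hn : 0 < INR n by apply: lt_0_INR; apply/ltP; apply: leq_trans hdn.
have Hd : 0 < INR d by apply: lt_0_INR; apply/ltP.
have Hbin : INR n ^ d <= INR d ^ d * INR 'C(n, d).
  by have := INR_leq (binom_lower hdn); rewrite INR_muln !INR_expn.
have lnC_up : ln (INR 'C(n, d)) <= INR m * ln 2 + INR z * ln 2 + ln (INR (Ssum N e1)).
  have := lnle (Rlt_le_trans _ _ _ Rlt_0_1 HC1) HC.
  rewrite ln_mult; try solve [apply pow_lt; lra | apply Rmult_lt_0_compat; [apply pow_lt|]; lra].
  rewrite ln_mult; try solve [apply pow_lt; lra | lra].
  rewrite !ln_pow; lra.
have lnC_low : INR d * ln (INR n / INR d) <= ln (INR 'C(n, d)).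
  have := lnle (pow_lt _ d Hn) Hbin.
  rewrite ln_mult; try solve [apply pow_lt; lra | lra].
  rewrite !ln_pow; try lra.
  rewrite /Rdiv ln_mult; try solve [apply Rinv_0_lt_compat; lra | lra].
  rewrite ln_Rinv; lra.
have hzs : INR z + INR s = INR d + INR e0.
  by rewrite /s minus_INR ?plus_INR; [lra | apply/leP].
case he: (eqn e1 0).
  have he0 : e1 = 0%N by apply/eqP.
  rewrite he0 in lnC_up.
  have hT : Ssum N 0 = 1%N by rewrite /Ssum big_ord_recr big_ord0 bin0.
  rewrite hT /= ln_1 in lnC_up.
  rewrite /log2.
  have hs0 := pos_INR s.
  have -> : INR d * (ln (INR n / INR d) / ln 2) = (INR d * ln (INR n / INR d)) / ln 2 by field; lra.
  have : INR d * ln (INR n / INR d) / ln 2 <= INR m + INR d + INR e0.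
    apply: div_le; nra.
  lra.
have he1 : (0 < e1)%N by rewrite lt0n; exact: negbT he.
set K := INR n - INR d - INR e0.
have HN : INR N = K + INR s.
  rewrite /N /K minus_INR; last by apply/leP.
  lra.
have HT2 : INR (Ssum N e1) <= 2 ^ N.
  by have := INR_leq (Ssum_pow2 N e1); rewrite INR_expn.
have Hb : (e1 <= N)%N -> INR e1 ^ e1 * INR N ^ (N - e1) * INR (Ssum N e1) <= INR (N + e1) ^ N.
  by move=> h; have := INR_leq (Ssum_bound h); rewrite !INR_muln !INR_expn.
have hT := key_real he1 HN HT1 HT2 Hb.
rewrite /log2.
set Lm := ln (Rmax 2 (K / INR e1)).
have -> : INR d * (ln (INR n / INR d) / ln 2) - INR d - INR e0 - 4 * (INR e1 * (Lm / ln 2))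
   = (INR d * ln (INR n / INR d) - 4 * INR e1 * Lm) / ln 2 - INR d - INR e0 by field; lra.
have : (INR d * ln (INR n / INR d) - 4 * INR e1 * Lm) / ln 2 <= INR m + INR d + INR e0.
  have hzl : INR z * ln 2 + INR s * ln 2 = (INR d + INR e0) * ln 2 by rewrite -hzs; ring.
  rewrite -/Lm in hT. apply: div_le => //; lra.
lra.
Qed.
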